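(* Let $n\ge 2$, $k\ge 1$, $I=\{0,\ldots,n-1\}$. Let $\tilde S_n(k)$ be the set of bijections $u$ of $\mathbb{Z}/kn\mathbb{Z}$ such that $u(j+n)=u(j)+n$ for all $j\in\mathbb{Z}/kn\mathbb{Z}$ and $\sum_{i=1}^n u(i)\equiv\binom{n+1}{2}\pmod{kn}$. Then: (1) $\tilde S_n(k)$ is well defined, i.e. it is a group under composition; (2) the map $\varphi:\tilde S_n\to\tilde S_n(k)$, $\varphi([a_1,\ldots,a_n])=[a_1\bmod kn,\ldots,a_n\bmod kn]$ (i.e. $\varphi(u)(j\bmod kn)=u(j)\bmod kn$), is a homomorphism, and $\tilde S_n(k)$ is isomorphic to the quotient $\tilde S_n/\ker\varphi$; (3) with $N=\ker\varphi$, $N\cap K_{\{i\}}=\{e\}$ for every $i\in I$, where $K_{\{i\}}=\langle\tilde s_j:j\in I,\ j\ne i\rangle$; (4) $|\tilde S_n(k)|=k^{n-1}\,n!$.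
   Context: $\tilde S_n$ is the group (under composition) of all bijections $u:\mathbb{Z}\to\mathbb{Z}$ with $u(j+n)=u(j)+n$ for all $j$ and $\sum_{i=1}^n u(i)=\binom{n+1}{2}$, written $u=[u(1),\ldots,u(n)]$. Its generators are $\tilde s_i=[1,\ldots,i-1,i+1,i,i+2,\ldots,n]$ for $1\le i\le n-1$ and $\tilde s_0=[0,2,\ldots,n-1,n+1]$. Elements of $\tilde S_n(k)$ are likewise written $[u(1),\ldots,u(n)]$. *)

(* Defs.v *)
From HB Require Import structures.
From mathcomp Require Import all_boot all_order all_fingroup all_algebra.
Unset Printing Implicit Defensive.
Import Order.TTheory GRing.Theory Num.Theory.
Local Open Scope ring_scope.

Definition affperm (n : nat) (u : int -> int) : Prop :=
  bijective u /\
  (forall j : int, u (j + n%:Z) = u j + n%:Z) /\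
  \sum_(1 <= i < n.+1) u i%:Z = ('C(n.+1, 2))%:Z.

Definition Sk (k n : nat) : {set {perm 'Z_(k * n)}} :=
  [set p : {perm 'Z_(k * n)} |
     [forall j : 'Z_(k * n), p (j + n%:R) == p j + n%:R] &&
     (\sum_(i < n) p (i.+1)%:R == ('C(n.+1, 2))%:R)].

(* phi(u)(j mod kn) = u(j) mod kn, computed on the representative
   j in {0,..,kn-1} of the residue class. *)
Definition phif (k n : nat) (u : int -> int) (x : 'Z_(k * n)) : 'Z_(k * n) :=
  (u (nat_of_ord x)%:Z)%:~R.

Definition kerphi (k n : nat) (u : int -> int) : Prop :=
  affperm n u /\ forall x, phif k n u x = x.

(* generators \tilde s_i, i in {0,..,n-1}:
   \tilde s_i(j) = j+1 if j = i mod n, j-1 if j = i+1 mod n, j otherwise.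
   (For 1 <= i <= n-1 this is [1,..,i+1,i,..,n]; for i = 0 it is
   [0,2,...,n-1,n+1].) *)
Definition sgen (n i : nat) (j : int) : int :=
  if (j %% n%:Z)%Z == i%:Z then j + 1
  else if (j %% n%:Z)%Z == ((i.+1)%:Z %% n%:Z)%Z then j - 1
  else j.

Inductive gen_by (S : (int -> int) -> Prop) : (int -> int) -> Prop :=
| gen_id : forall f, (forall j, f j = j) -> gen_by S f
| gen_mul : forall s f h, S s -> gen_by S f ->
    (forall j, h j = s (f j)) -> gen_by S h
| gen_mulinv : forall s g f h, S s ->
    (forall j, s (g j) = j) -> (forall j, g (s j) = j) ->
    gen_by S f -> (forall j, h j = g (f j)) -> gen_by S h.

Definition Kgen (n i : nat) : (int -> int) -> Prop :=
  gen_by (fun s => exists2 j : nat, (j < n)%N /\ j <> i &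
                     forall x, s x = sgen n j x).

(* Main.v *)
Require Import Defs.
From HB Require Import structures.
From mathcomp Require Import all_boot all_order all_fingroup all_algebra.
From mathcomp Require Import ring zify.
Import Order.TTheory GRing.Theory Num.Theory.
Local Open Scope ring_scope.

Section ZmLemmas.
Variable m : nat.
Hypothesis hm : (1 < m)%N.

Lemma Zm_val_lt (z : 'Z_m) : (nat_of_ord z < m)%N.
Proof. change (nat_of_ord z < m)%N; have := ltn_ord z; move: (nat_of_ord z) => v; by rewrite Zp_cast. Qed.

Lemma Zm_natE (z : 'Z_m) : (nat_of_ord z)%:R = z.
Proof. exact: natr_Zp. Qed.

Lemma Zm_intE (z : 'Z_m) : ((nat_of_ord z)%:Z)%:~R = z.
Proof. by rewrite -pmulrn Zm_natE. Qed.

Lemma Zm_char : (m%:R : 'Z_m) = 0.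
Proof. exact: pchar_Zp. Qed.

Lemma Zm_nat_eq (a b : nat) : (a%:R : 'Z_m) = b%:R -> (a %% m = b %% m)%N.
Proof. by move=> h; rewrite -!(val_Zp_nat hm) h. Qed.

Lemma Zm_nat_inj (a b : nat) : (a < m)%N -> (b < m)%N ->
  (a%:R : 'Z_m) = b%:R -> a = b.
Proof. by move=> ha hb /Zm_nat_eq; rewrite !modn_small. Qed.

Lemma Zm_mulm (t : int) : ((t * m%:Z)%:~R : 'Z_m) = 0.
Proof. by rewrite intrM -pmulrn Zm_char mulr0. Qed.

Lemma Zm_int0 (z : int) : (z%:~R : 'Z_m) = 0 -> (m%:Z %| z)%Z.
Proof.
move=> h; apply/dvdz_mod0P.
have hm0 : m%:Z != 0 by rewrite eqz_nat -lt0n ltnW.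
have hr : 0 <= (z %% m%:Z)%Z by apply: modz_ge0.
have hr2 : (z %% m%:Z)%Z < m%:Z by apply: ltz_pmod; rewrite ltz_nat ltnW.
move: h; rewrite {1}(divz_eq z m%:Z) intrD Zm_mulm add0r.
rewrite -(gez0_abs hr) -pmulrn => h.
have := @Zm_nat_eq _ 0 h; rewrite mod0n modn_small; first by move->.
by rewrite -ltz_nat gez0_abs.
Qed.

Lemma Zm_int_eq (a b : int) : (a%:~R : 'Z_m) = b%:~R ->
  exists t : int, a = b + t * m%:Z.
Proof.
move=> h; have : ((a - b)%:~R : 'Z_m) = 0 by rewrite intrB h subrr.
move/Zm_int0/dvdzP => [t ht]; exists t; by rewrite -ht addrC subrK.
Qed.

End ZmLemmas.

Section Main.
Variables (n' k : nat).
Hypothesis hk : (0 < k)%N.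
Local Notation n := n'.+2.
Local Notation N := (k * n'.+2)%N.

Lemma hN : (1 < N)%N.
Proof. exact: leq_trans (isT : (1 < n)%N) (leq_pmull _ hk). Qed.
Lemma hn : (1 < n)%N. Proof. by []. Qed.

Definition compat (u : int -> int) := forall j, u (j + n%:Z) = u j + n%:Z.

Lemma compat_nat u : compat u -> forall (q : nat) j, u (j + q%:Z * n%:Z) = u j + q%:Z * n%:Z.
Proof.
move=> hu; elim=> [|q IH] j; first by rewrite !mul0r !addr0.
have -> : j + (q.+1)%:Z * n%:Z = (j + q%:Z * n%:Z) + n%:Z by rewrite intS; ring.
by rewrite hu IH intS; ring.
Qed.

Lemma compatZ u : compat u -> forall (t : int) j, u (j + t * n%:Z) = u j + t * n%:Z.
Proof.
move=> hu t j; case: (leP 0 t) => ht.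
  by rewrite -(gez0_abs ht) compat_nat.
set m := `|t|%N.
have e : t = - (m%:Z) by rewrite /m ltz0_abs // opprK.
have := compat_nat u hu m (j + t * n%:Z).
have -> : j + t * n%:Z + m%:Z * n%:Z = j by rewrite e; ring.
move=> ->; rewrite e; ring.
Qed.

Definition zr (j : int) : 'I_n := inord `|(j %% n%:Z)%Z|%N.

Lemma zr_ge0 j : 0 <= (j %% n%:Z)%Z.
Proof. by apply: modz_ge0. Qed.

Lemma zrE j : ((zr j : nat) : int) = (j %% n%:Z)%Z.
Proof.
rewrite /zr inordK; first by rewrite gez0_abs // zr_ge0.
by rewrite -ltz_nat gez0_abs ?zr_ge0 // ltz_pmod.
Qed.

Lemma zr_dec j : j = (zr j : nat)%:Z + (j %/ n%:Z)%Z * n%:Z.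
Proof. by rewrite zrE addrC -divz_eq. Qed.

Lemma zrZn j : ((zr j : nat)%:R : 'Z_n) = j%:~R.
Proof.
by rewrite {2}(zr_dec j) intrD intrM -!pmulrn Zm_char // mulr0 addr0.
Qed.

Lemma ordZn_inj (r s : 'I_n) : (r%:R : 'Z_n) = s%:R -> r = s.
Proof. by move=> /(Zm_nat_inj n hn _ _ (ltn_ord r) (ltn_ord s)) /val_inj. Qed.

Lemma zr_eq a b : (a%:~R : 'Z_n) = b%:~R -> zr a = zr b.
Proof. by move=> h; apply: ordZn_inj; rewrite !zrZn. Qed.

Lemma zr_eqE a b : zr a = zr b -> (a%:~R : 'Z_n) = b%:~R.
Proof. by move=> h; rewrite -!zrZn h. Qed.

Lemma zr_ord (r : 'I_n) : zr (r : nat)%:Z = r.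
Proof. by apply: ordZn_inj; rewrite zrZn -pmulrn. Qed.

Lemma zr_nat (a : nat) : (zr a%:Z : nat) = (a %% n)%N.
Proof. by apply/eqP; rewrite -eqz_nat zrE modz_nat. Qed.

Lemma affD u : compat u -> forall j, u j = j + (u (zr j : nat)%:Z - (zr j : nat)%:Z).
Proof.
move=> hu j; rewrite {1 2}(zr_dec j) compatZ //; ring.
Qed.

Lemma ZN_eq a b : (a%:~R : 'Z_N) = b%:~R -> exists t : int, a = b + t * n%:Z.
Proof.
move/(Zm_int_eq N hN) => [t ->]; exists (t * k%:Z); by rewrite PoszM mulrA.
Qed.

Lemma ZN_Zn a b : (a%:~R : 'Z_N) = b%:~R -> (a%:~R : 'Z_n) = b%:~R.
Proof.
move/ZN_eq => [t ->]; by rewrite intrD Zm_mulm // addr0.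
Qed.

Lemma CL u : compat u -> forall a b, (a%:~R : 'Z_N) = b%:~R -> ((u a)%:~R : 'Z_N) = (u b)%:~R.
Proof.
move=> hu a b /(Zm_int_eq N hN) [t ->].
rewrite PoszM mulrA compatZ // intrD -mulrA -PoszM Zm_mulm ?addr0 //; exact: hN.
Qed.


Definition delta (u : int -> int) := \sum_(r < n) (u (r : nat)%:Z - (r : nat)%:Z).

Lemma sumZ_nat (I : finType) (F : I -> nat) : ((\sum_i F i)%N)%:Z = \sum_i (F i)%:Z.
Proof. by elim/big_rec2: _ => // i x y _ <-; rewrite PoszD. Qed.

Lemma sum_ordZ : \sum_(r < n) (r : nat)%:Z = ('C(n, 2))%:Z.
Proof. by rewrite -sumZ_nat -bin2_sum big_mkord. Qed.

Lemma sum_shift u : compat u ->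
  \sum_(1 <= i < n.+1) u i%:Z = \sum_(r < n) u (r : nat)%:Z + n%:Z.
Proof.
move=> hu; rewrite big_add1 /= big_mkord big_ord_recr /= [in RHS]big_ord_recl /=.
have -> : u n%:Z = u 0 + n%:Z by rewrite -hu add0r.
have -> : \sum_(i < n'.+1) u (lift ord0 i : nat)%:Z = \sum_(i < n'.+1) u (i.+1)%:Z.
  by apply: eq_bigr => i _; rewrite lift0.
ring.
Qed.

Lemma affperm_delta u : compat u ->
  (\sum_(1 <= i < n.+1) u i%:Z = ('C(n.+1, 2))%:Z) <-> delta u = 0.
Proof.
move=> hu; rewrite sum_shift // /delta sumrB sum_ordZ binS bin1 PoszD.
split=> h.
  by apply/eqP; rewrite subr_eq0; apply/eqP; apply: (addIr n%:Z).
by move/eqP: h; rewrite subr_eq0 => /eqP ->.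
Qed.

Lemma resinj u : compat u -> injective u ->
  forall r s : 'I_n, zr (u (r : nat)%:Z) = zr (u (s : nat)%:Z) -> r = s.
Proof.
move=> hu iu r s /zr_eqE /(Zm_int_eq n hn) [t ht].
have : u (r : nat)%:Z = u ((s : nat)%:Z + t * n%:Z) by rewrite compatZ.
move/iu => e; apply: ordZn_inj.
by rewrite !pmulrn e intrD Zm_mulm // addr0.
Qed.

Lemma delta_comp u v : compat u -> compat v -> injective v ->
  delta (u \o v) = delta u + delta v.
Proof.
move=> hu hv iv; rewrite /delta.
have -> : \sum_(r < n) ((u \o v) (r : nat)%:Z - (r : nat)%:Z) =
   \sum_(r < n) ((u (zr (v (r : nat)%:Z) : nat)%:Z - (zr (v (r : nat)%:Z) : nat)%:Z)
                 + (v (r : nat)%:Z - (r : nat)%:Z)).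
  apply: eq_bigr => r _ /=; rewrite {1}(affD u hu (v _)); ring.
rewrite big_split /=; congr (_ + _).
have hi : injective (fun r : 'I_n => zr (v (r : nat)%:Z)) by move=> r s /(resinj v hv iv).
by rewrite [RHS](reindex_inj hi).
Qed.

Lemma compat_inv u v : compat u -> cancel u v -> cancel v u -> compat v.
Proof.
move=> hu uv vu j; apply: (can_inj uv).
by rewrite hu !vu.
Qed.

Definition aff (F : 'I_n -> int) (j : int) : int :=
  j + (F (zr j) - (zr j : nat)%:Z).

Lemma zr_addn j : zr (j + n%:Z) = zr j.
Proof. by apply: zr_eq; rewrite intrD -pmulrn Zm_char // addr0. Qed.

Lemma aff_compat F : compat (aff F).
Proof. by move=> j; rewrite /aff zr_addn; ring. Qed.

Lemma aff_ord F (r : 'I_n) : aff F (r : nat)%:Z = F r.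
Proof. by rewrite /aff zr_ord; ring. Qed.

Lemma aff_delta F : delta (aff F) = \sum_(r < n) (F r - (r : nat)%:Z).
Proof. by apply: eq_bigr => r _; rewrite aff_ord. Qed.

Lemma affbij (F : 'I_n -> int) : injective (fun r => zr (F r)) -> bijective (aff F).
Proof.
move=> hF; have [tau st ts] := injF_bij hF.
pose g y := y - (F (tau (zr y)) - (tau (zr y) : nat)%:Z).
have zg y : zr (g y) = tau (zr y).
  rewrite -[RHS]zr_ord; apply: zr_eq.
  rewrite /g !intrB (zr_eqE _ _ (ts (zr y))); ring.
exists g => [j | y].
  rewrite /g /aff.
  have -> : zr (j + (F (zr j) - (zr j : nat)%:Z)) = zr (F (zr j)).
    apply: zr_eq; rewrite intrD intrB -(zrZn j) -pmulrn; ring.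
  rewrite st; ring.
by rewrite /aff zg /g; ring.
Qed.

Lemma intr_sum (R : pzRingType) (I : finType) (F : I -> int) :
  ((\sum_i F i)%:~R : R) = \sum_i (F i)%:~R.
Proof. by elim/big_rec2: _ => // i x y _ <-; rewrite intrD. Qed.

Lemma phif_congr u : compat u -> forall a : int,
  ((u a)%:~R : 'Z_N) = phif k n u (a%:~R).
Proof. move=> hu a; rewrite /phif; apply: CL => //. by rewrite Zm_intE. Qed.

Lemma phif_comp u v : compat u -> forall x,
  phif k n (u \o v) x = phif k n u (phif k n v x).
Proof. move=> hu x; exact: (phif_congr u hu (v (nat_of_ord x)%:Z)). Qed.

Lemma sum_ord1 (u : int -> int) :
  \sum_(1 <= i < n.+1) u i%:Z = \sum_(i < n) u (i.+1)%:Z.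
Proof. by rewrite big_add1 /= big_mkord. Qed.

Lemma phi_perm u : affperm n u ->
  exists2 p : {perm 'Z_N}, p \in Sk k n & forall x, p x = phif k n u x.
Proof.
move=> [[v uv vu] [hu hs]].
have hv : compat v := compat_inv u v hu uv vu.
have inj : injective (phif k n u).
  move=> x y h; have := CL v hv _ _ h.
  by rewrite !uv !(Zm_intE N).
exists (perm inj); last by move=> x; rewrite permE.
rewrite inE; apply/andP; split.
  apply/forallP => j; apply/eqP; rewrite !permE.
  have -> : phif k n u j + n%:R = ((u ((j : nat)%:Z + n%:Z))%:~R : 'Z_N).
    by rewrite hu intrD -pmulrn.
  by rewrite phif_congr // intrD (Zm_intE N) -pmulrn.
apply/eqP.
have e : forall i : nat, perm inj (i%:R) = ((u i%:Z)%:~R).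
  by move=> i; rewrite permE pmulrn -phif_congr.
under eq_bigr do rewrite e.
by rewrite -intr_sum -sum_ord1 hs -pmulrn.
Qed.

Definition compatN (p : {perm 'Z_N}) := forall j, p (j + n%:R) = p j + n%:R.

Lemma SkP p : p \in Sk k n ->
  compatN p /\ \sum_(i < n) p (i.+1)%:R = ('C(n.+1, 2))%:R.
Proof. rewrite inE => /andP [/forallP h /eqP hs]; split => // j; exact/eqP/h. Qed.

Lemma compatN_nat p : compatN p -> forall (q : nat) j,
  p (j + (q * n)%:R) = p j + (q * n)%:R.
Proof.
move=> hp; elim=> [|q IH] j; first by rewrite mul0n !addr0.
by rewrite mulSn natrD addrA addrAC hp IH; ring.
Qed.

Lemma affN p : compatN p -> forall x : 'Z_N,
  p x = p ((zr (nat_of_ord x)%:Z : nat)%:R) + ((nat_of_ord x %/ n) * n)%:R.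
Proof.
move=> hp x.
by rewrite -{1}(Zm_natE N x) {1}(divn_eq (nat_of_ord x) n) addnC natrD compatN_nat // zr_nat.
Qed.

Lemma Sk_ext p q : compatN p -> compatN q ->
  (forall r : 'I_n, p (r : nat)%:R = q (r : nat)%:R) -> p = q.
Proof.
move=> hp hq h; apply/permP => x; by rewrite (affN p) // (affN q) // h.
Qed.

Lemma sum_shiftN p : compatN p ->
  \sum_(i < n) p (i.+1)%:R = \sum_(r < n) p (r : nat)%:R + n%:R.
Proof.
move=> hp; rewrite big_ord_recr /= [in RHS]big_ord_recl /=.
have -> : p (n%:R) = p (0%:R) + n%:R by rewrite -hp mulr0n add0r.
have -> : \sum_(i < n'.+1) p (lift ord0 i : nat)%:R = \sum_(i < n'.+1) p (i.+1)%:R.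
  by apply: eq_bigr => i _; rewrite lift0.
ring.
Qed.

Lemma Sk_sum p : p \in Sk k n -> \sum_(r < n) p (r : nat)%:R = ('C(n, 2))%:R.
Proof.
move=> /SkP [hp hs]; apply: (addIr (n%:R : 'Z_N)).
by rewrite -sum_shiftN // hs binS bin1 natrD.
Qed.

Definition resZ (z : 'Z_N) : 'Z_n := (nat_of_ord z)%:R.

Lemma resZ_int a : resZ (a%:~R) = a%:~R.
Proof. by rewrite /resZ pmulrn; apply: ZN_Zn; rewrite Zm_intE. Qed.

Lemma resZ_nat a : resZ (a%:R) = a%:R.
Proof. by rewrite !pmulrn resZ_int. Qed.

Lemma resZD x y : resZ (x + y) = resZ x + resZ y.
Proof.
by rewrite -(Zm_natE N x) -(Zm_natE N y) -natrD !resZ_nat natrD.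
Qed.

Lemma resinjN p : compatN p -> forall r s : 'I_n,
  resZ (p (r : nat)%:R) = resZ (p (s : nat)%:R) -> r = s.
Proof.
move=> hp r s h.
set a := nat_of_ord (p (r : nat)%:R); set b := nat_of_ord (p (s : nat)%:R).
have hab : (a %% n = b %% n)%N by apply: (Zm_nat_eq n hn); exact: h.
have ea : p (r : nat)%:R = (a %% n)%:R + ((a %/ n) * n)%:R.
  by rewrite -natrD addnC -divn_eq Zm_natE.
have eb : p (s : nat)%:R = (a %% n)%:R + ((b %/ n) * n)%:R.
  by rewrite hab -natrD addnC -divn_eq Zm_natE.
have : p ((r : nat)%:R + ((b %/ n) * n)%:R) = p ((s : nat)%:R + ((a %/ n) * n)%:R).
  by rewrite !compatN_nat // ea eb; ring.
move/perm_inj => e; have := congr1 resZ e.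
rewrite !resZD !resZ_nat !natrM Zm_char // !mulr0 !addr0 => /ordZn_inj.
by [].
Qed.

Lemma lift_g (g : 'I_n -> 'Z_N) :
  (forall r s, resZ (g r) = resZ (g s) -> r = s) ->
  \sum_r g r = ('C(n, 2))%:R ->
  exists2 u, affperm n u & forall r : 'I_n, ((u (r : nat)%:Z)%:~R : 'Z_N) = g r.
Proof.
move=> ginj gs.
pose c : int := ('C(n, 2))%:Z - \sum_(r < n) (nat_of_ord (g r))%:Z.
have c0 : (c%:~R : 'Z_N) = 0.
  rewrite /c intrB intr_sum.
  under eq_bigr do rewrite (Zm_intE N).
  by rewrite gs -pmulrn subrr.
pose F (r : 'I_n) : int := (nat_of_ord (g r))%:Z + (if r == ord0 then c else 0).
have FN r : ((F r)%:~R : 'Z_N) = g r.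
  rewrite /F intrD (Zm_intE N).
  by case: (r == ord0); rewrite ?c0 ?mulr0z ?addr0.
exists (aff F).
  split; [|split].
  - apply: affbij => r s /zr_eqE h; apply: ginj.
    by rewrite -!FN !resZ_int h.
  - exact: aff_compat.
  - apply/affperm_delta; first exact: aff_compat.
    rewrite aff_delta sumrB /F big_split /= -big_mkcond big_pred1_eq sum_ordZ /c.
    ring.
by move=> r; rewrite aff_ord FN.
Qed.

Lemma Sk_lift p : p \in Sk k n ->
  exists2 u, affperm n u & forall x, p x = phif k n u x.
Proof.
move=> Hp; have [hp hs] := SkP p Hp.
have [u hu hur] := lift_g (fun r => p (r : nat)%:R) (resinjN p hp) (Sk_sum p Hp).
have [q hq hqu] := phi_perm u hu.
exists u => // x.
have -> : p = q.
  apply: Sk_ext => // [|r]; first exact: (SkP q hq).1.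
  by rewrite hqu pmulrn -phif_congr ?hur //; case: hu => _ [].
exact: hqu.
Qed.

Lemma kerphi_coset u v : affperm n u -> affperm n v ->
  ((forall x, phif k n u x = phif k n v x) <->
   exists2 w, kerphi k n w & forall j, u j = w (v j)).
Proof.
move=> [bu [cu su]] [bv [cv sv]]; split.
- move=> h; have [v' vv' v'v] := bv.
  have cv' : compat v' := compat_inv v v' cv vv' v'v.
  have huv a : ((u a)%:~R : 'Z_N) = (v a)%:~R by rewrite !phif_congr // h.
  have cw : compat (u \o v') by move=> j /=; rewrite cv' cu.
  exists (u \o v'); last by move=> j /=; rewrite vv'.
  split; first split.
  + apply: bij_comp => //; exact: (Bijective v'v vv').
  + split => //; apply/affperm_delta => //.
    have := delta_comp (u \o v') v cw cv (can_inj vv').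
    have -> : delta ((u \o v') \o v) = delta u by apply: eq_bigr => r _ /=; rewrite vv'.
    move/affperm_delta: su => -> //; move/affperm_delta: sv => -> //.
    by rewrite addr0.
  + move=> x; by rewrite /phif /= huv v'v (Zm_intE N).
- move=> [w [[bw [cw sw]] hw] e] x.
  by rewrite [LHS]/phif e (phif_congr w cw) hw.
Qed.

Lemma affperm_id : affperm n id.
Proof.
split; first by exists id.
split => //; apply/(affperm_delta id (fun j => erefl)).
by apply: big1 => r _; rewrite subrr.
Qed.

Lemma affperm_comp u v : affperm n u -> affperm n v -> affperm n (u \o v).
Proof.
move=> [bu [cu su]] [bv [cv sv]].
have cuv : compat (u \o v) by move=> j /=; rewrite cv cu.
split; first exact: bij_comp.
split => //; apply/(affperm_delta _ cuv).
rewrite delta_comp //; last exact: bij_inj.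
by move/affperm_delta: su => -> //; move/affperm_delta: sv => -> //; rewrite addr0.
Qed.

Lemma Sk_group : group_set (Sk k n).
Proof.
apply/group_setP; split.
  have [q hq hqe] := phi_perm id affperm_id.
  have -> : (1 : {perm 'Z_N})%g = q.
    by apply/permP => x; rewrite hqe perm1 /phif /= (Zm_intE N).
  exact: hq.
move=> p q hp hq.
have [u au hu] := Sk_lift p hp; have [v av hv] := Sk_lift q hq.
have [r hr hre] := phi_perm (v \o u) (affperm_comp v u av au).
have -> : (p * q)%g = r.
  apply/permP => x; rewrite hre permM hu hv phif_comp //.
  by case: av => _ [].
exact: hr.
Qed.

Definition inW (i : nat) (x : int) : bool := (i%:Z < x) && (x <= i%:Z + n%:Z).

Lemma modn_ij (a b : nat) (t : int) : (a < n)%N -> (b < n)%N ->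
  ((a%:Z + t) %% n%:Z)%Z = ((b%:Z + t) %% n%:Z)%Z -> a = b.
Proof.
move=> ha hb; move: (ha) (hb).
have ea : (a%:Z %% n%:Z)%Z = a%:Z by apply: modz_small; lia.
have eb : (b%:Z %% n%:Z)%Z = b%:Z by apply: modz_small; lia.
move=> ha' hb' /eqP; rewrite eqz_modDr => /eqP; rewrite ea eb; by case.
Qed.

Lemma sgen_W i j x : (i < n)%N -> (j < n)%N -> j <> i ->
  inW i (sgen n j x) = inW i x.
Proof.
move=> hi hj hji; rewrite /sgen.
case: ifP => [/eqP h1 | _].
  have h1' : (x %% n%:Z)%Z = ((j%:Z + 0) %% n%:Z)%Z.
    rewrite addr0 h1; symmetry; apply: modz_small; lia.
  have x1 : x <> i%:Z.
    move=> ex; apply: hji; symmetry; apply: (modn_ij i j 0) => //.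
    by rewrite -h1' ex addr0.
  have x2 : x <> i%:Z + n%:Z.
    move=> ex; apply: hji; symmetry; apply: (modn_ij i j 0) => //.
    by rewrite -h1' ex addr0 modzDr.
  rewrite /inW; apply/idP/idP => /andP [a b]; apply/andP; split; lia.
case: ifP => [/eqP h2 | _ //].
have x1 : x <> i%:Z + 1.
  move=> ex; apply: hji; symmetry; apply: (modn_ij i j 1) => //.
  by rewrite -ex h2 intS addrC.
have x2 : x <> i%:Z + 1 + n%:Z.
  move=> ex; apply: hji; symmetry; apply: (modn_ij i j 1) => //.
  by rewrite -(modzDr _ n%:Z) -ex h2 intS addrC.
rewrite /inW; apply/idP/idP => /andP [a b]; apply/andP; split; lia.
Qed.

Lemma Kgen_W i f : (i < n)%N -> Kgen n i f -> forall x, inW i (f x) = inW i x.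
Proof.
move=> hi; elim.
- by move=> f0 hid x; rewrite hid.
- move=> s f0 h [j [hj hji] hs] _ IH hh x.
  by rewrite hh hs sgen_W // IH.
- move=> s g f0 h [j [hj hji] hs] sg gs _ IH hh x.
  by rewrite hh -(sgen_W i j (g (f0 x))) // -hs sg IH.
Qed.

Lemma ker_K i u : (i < n)%N -> kerphi k n u -> Kgen n i u -> forall j, u j = j.
Proof.
move=> hi [[bu [cu su]] hker] hK j.
have hmod a : ((u a)%:~R : 'Z_N) = a%:~R by rewrite (phif_congr u cu) hker.
have hNn : (n%:Z <= N%:Z) by rewrite lez_nat leq_pmull.
have hW x : inW i x -> u x = x.
  move=> hx; have hux : inW i (u x) by rewrite (Kgen_W i u hi hK).
  have [t ht] := Zm_int_eq N hN _ _ (hmod x).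
  move: hx hux; rewrite /inW ht => /andP [h1 h2] /andP [h3 h4].
  have -> : t = 0.
    move: h1 h2 h3 h4 hNn; set M := (N%:Z); nia.
  by rewrite mul0r addr0.
pose q := ((j - (i%:Z + 1)) %/ n%:Z)%Z.
pose x := ((j - (i%:Z + 1)) %% n%:Z)%Z + (i%:Z + 1).
have e := divz_eq (j - (i%:Z + 1)) n%:Z.
have ej : j = x + q * n%:Z.
  rewrite /x /q; move: e.
  set A := (_ %/ _)%Z; set B := (_ %% _)%Z; lia.
have hx : inW i x.
  have h0 : 0 <= ((j - (i%:Z + 1)) %% n%:Z)%Z by apply: modz_ge0.
  have h1 : ((j - (i%:Z + 1)) %% n%:Z)%Z < n%:Z by apply: ltz_pmod.
  rewrite /inW /x; apply/andP; split; lia.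
by rewrite ej compatZ // hW.
Qed.

Lemma card_Zm m : (1 < m)%N -> #|{: 'Z_m}| = m.
Proof. by move=> hm; rewrite card_ord Zp_cast. Qed.

Lemma Zm_nat0 m (hm : (1 < m)%N) a : ((a%:R : 'Z_m) == 0) = (m %| a)%N.
Proof. by rewrite -val_eqE /= val_Zp_nat // dvdn_eq0 ?dvdnE. Qed.

Definition Wm (p : {perm 'Z_N}) : {ffun 'I_n -> 'Z_N} := [ffun r : 'I_n => p (r : nat)%:R].

Definition Gset := [set g : {ffun 'I_n -> 'Z_N} |
  injectiveb (fun r => resZ (g r)) & \sum_r g r == ('C(n, 2))%:R].

Lemma card_Sk_G : #|Sk k n| = #|Gset|.
Proof.
rewrite -(card_in_imset (f := Wm)); last first.
  move=> p q hp hq /ffunP e; apply: Sk_ext.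
  - exact: (SkP p hp).1.
  - exact: (SkP q hq).1.
  - by move=> r; have := e r; rewrite !ffunE.
congr #|pred_of_set _|.
apply/setP => g; apply/imsetP/idP.
  move=> [p hp ->]; rewrite inE; apply/andP; split.
    apply/injectiveP => r s; rewrite !ffunE; exact: resinjN (SkP p hp).1 r s.
  apply/eqP; under eq_bigr do rewrite ffunE; exact: Sk_sum.
rewrite inE => /andP [/injectiveP gi /eqP gs].
have [u hu hur] := lift_g (fun r => g r) gi gs.
have [q hq hqu] := phi_perm u hu.
exists q => //; apply/ffunP => r.
by rewrite ffunE hqu pmulrn -phif_congr ?hur //; case: hu => _ [].
Qed.

Lemma cardB m : #|[set l : {ffun 'I_m.+1 -> 'I_k} | (k %| \sum_i l i)%N]| = (k ^ m)%N.
Proof.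
pose rs (l : {ffun 'I_m.+1 -> 'I_k}) : {ffun 'I_m -> 'I_k} :=
  [ffun i => l (widen_ord (leqnSn m) i)].
have wl (i : 'I_m) : widen_ord (leqnSn m) i = lift ord_max i.
  by apply: val_inj; rewrite /= /bump leqNgt ltn_ord.
rewrite -(card_in_imset (f := rs)); last first.
  move=> l1 l2; rewrite !inE => h1 h2 /ffunP e.
  have e' i : l1 (widen_ord (leqnSn m) i) = l2 (widen_ord (leqnSn m) i).
    by have := e i; rewrite !ffunE.
  apply/ffunP => i; case: (unliftP ord_max i) => [j -> | ->].
    by rewrite -wl e'.
  move: h1 h2; rewrite !big_ord_recr /=.
  have -> : (\sum_(i < m) l1 (widen_ord (leqnSn m) i) = \sum_(i < m) l2 (widen_ord (leqnSn m) i))%N.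
    by apply: eq_bigr => i0 _; rewrite e'.
  rewrite /dvdn => /eqP h1 /eqP h2; apply: val_inj.
  have : ((\sum_(i < m) l2 (widen_ord (leqnSn m) i) + l1 ord_max) =
          (\sum_(i < m) l2 (widen_ord (leqnSn m) i) + l2 ord_max) %[mod k])%N.
    by rewrite h1 h2.
  move/eqP; rewrite eqn_modDl !modn_small //; by move/eqP.
have -> : rs @: [set l : {ffun 'I_m.+1 -> 'I_k} | (k %| \sum_i l i)%N] = setT.
  apply/setP => mu; rewrite inE; apply/imsetP.
  pose S := (\sum_i (mu i : nat))%N.
  pose x0 : 'I_k := Ordinal (ltn_pmod (k - S %% k) hk).
  pose l : {ffun 'I_m.+1 -> 'I_k} := [ffun i => if unlift ord_max i is Some j then mu j else x0].
  have lw i : l (widen_ord (leqnSn m) i) = mu i by rewrite ffunE wl liftK.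
  exists l; last by apply/ffunP => i; rewrite ffunE lw.
  rewrite inE big_ord_recr /=.
  have -> : (\sum_(i < m) l (widen_ord (leqnSn m) i) = S)%N by apply: eq_bigr => i _; rewrite lw.
  rewrite ffunE unlift_none /=.
  have e : (S + (k - S %% k) = (S %/ k).+1 * k)%N.
    rewrite {1}(divn_eq S k) -addnA subnKC ?mulSn ?(addnC k) //.
    by apply: ltnW; rewrite ltn_pmod.
  by rewrite /dvdn modnDmr e modnMl.
by rewrite cardsT card_ffun !card_ord.
Qed.

Definition Emap (x : {ffun 'I_n -> 'Z_n} * {ffun 'I_n -> 'I_k}) : {ffun 'I_n -> 'Z_N} :=
  [ffun r => ((nat_of_ord (x.1 r) + n * x.2 r)%N)%:R].

Lemma Emap_inj : injective Emap.
Proof.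
move=> [s l] [s' l'] /ffunP e.
have bnd (a b : nat) : (a < n)%N -> (b < k)%N -> (a + n * b < N)%N.
  move=> ha hb; nia.
have h r : (nat_of_ord (s r) + n * l r = nat_of_ord (s' r) + n * l' r)%N.
  have := e r; rewrite !ffunE /=; apply: (Zm_nat_inj N hN).
    by apply: bnd; [exact: (Zm_val_lt n hn) | exact: ltn_ord].
  by apply: bnd; [exact: (Zm_val_lt n hn) | exact: ltn_ord].
have hs r : nat_of_ord (s r) = nat_of_ord (s' r).
  have := congr1 (modn^~ n) (h r).
  rewrite /= !(addnC (nat_of_ord _)) !(mulnC n) !modnMDl !modn_small //;
  exact: (Zm_val_lt n hn).
congr pair; apply/ffunP => r; apply: val_inj => /=; first exact: hs.
have := h r; rewrite hs => /addnI /eqP; rewrite eqn_mul2l /= => /eqP.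
by [].
Qed.

Lemma card_Gset : #|Gset| = (k ^ n'.+1 * n`!)%N.
Proof.
have bE : bijective Emap.
  apply: (inj_card_bij Emap_inj).
  rewrite card_prod !card_ffun !card_ord (Zp_cast hN) /=.
  by rewrite expnMn mulnC.
rewrite -(on_card_preimset (onW_bij _ bE)).
have -> : Emap @^-1: Gset =
    setX [set s : {ffun 'I_n -> 'Z_n} | injectiveb s]
         [set l : {ffun 'I_n -> 'I_k} | (k %| \sum_r l r)%N].
  apply/setP => -[s l]; rewrite !inE /=.
  have er r : resZ (Emap (s, l) r) = s r.
    by rewrite ffunE resZ_nat natrD natrM Zm_char // mul0r addr0 Zm_natE.
  rewrite (eq_injectiveb er).
  case si: (injectiveb s) => //=.
  have si' : injective (fun r : 'I_n => (s r : 'I_n)) by move/injectiveP: si.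
  have ss : (\sum_(r < n) nat_of_ord (s r) = 'C(n, 2))%N.
    rewrite -bin2_sum big_mkord.
    by rewrite [in RHS](reindex_inj si').
  under eq_bigr do rewrite ffunE.
  rewrite -natr_sum /= big_split /= -big_distrr /= ss natrD.
  rewrite -subr_eq0 addrAC subrr add0r (Zm_nat0 _ hN).
  by rewrite (mulnC k) dvdn_pmul2l.
rewrite cardsX card_inj_ffuns !card_ord /= ffactnn cardB mulnC.
by [].
Qed.
End Main.

Theorem mainTheorem6 (n k : nat) (hn : (2 <= n)%N) (hk : (1 <= k)%N) :
  (* (1) \tilde S_n(k) is a group under composition *)
  group_set (Sk k n) /\
  (* (2a) phi is well defined: phi(u) lies in \tilde S_n(k) *)
  (forall u, affperm n u ->
     exists2 p : {perm 'Z_(k * n)}, p \in Sk k n &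
       forall x, p x = phif k n u x) /\
  (* (2b) phi is a homomorphism *)
  (forall u v, affperm n u -> affperm n v ->
     forall x, phif k n (u \o v) x = phif k n u (phif k n v x)) /\
  (* (2c) \tilde S_n / ker phi ~= \tilde S_n(k): phi is onto ... *)
  (forall p, p \in Sk k n ->
     exists2 u, affperm n u & forall x, p x = phif k n u x) /\
  (* ... and phi u = phi v iff u and v lie in the same coset of ker phi *)
  (forall u v, affperm n u -> affperm n v ->
     ((forall x, phif k n u x = phif k n v x) <->
      exists2 w, kerphi k n w & forall j, u j = w (v j))) /\
  (* (3) N \cap K_{i} = {e} *)
  (forall i, (i < n)%N -> forall u, kerphi k n u -> Kgen n i u ->
     forall j, u j = j) /\
  (* (4) cardinality *)
  #|Sk k n| = (k ^ (n - 1) * n`!)%N.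
Proof.
case: n hn => [|[|n']] // hn.
split; first exact: (Sk_group n' k hk).
split; first by move=> u hu; exact: (phi_perm n' k hk u hu).
split; first by move=> u v [_ [cu _]] _ x; exact: phif_comp.
split; first by move=> p hp; exact: (Sk_lift n' k hk p hp).
split; first by move=> u v hu hv; exact: (kerphi_coset n' k hk u v hu hv).
split; first by move=> i hi u hu hK; exact: (ker_K n' k hk i u hi hu hK).
by rewrite (card_Sk_G n' k hk) (card_Gset n' k hk) subn1.
Qed.
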